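(* Let $m_1,m_2,r,n_1,n_2$ be nonnegative integers with $0\le n_2\le n_1$ and $n_1\ge 1$, and let $\gamma_{ik}\in\mathbb{C}$, $i=1,\dots,n_1-n_2$, $k=1,\dots,n_1$, be independent identically distributed random scalars drawn from a continuous (absolutely continuous) distribution on $\mathbb{C}$. Then, almost surely, the following holds: for every family of matrices $\mathbf{A}_1,\dots,\mathbf{A}_{n_1}\in\mathbb{C}^{m_1\times m_2}$ with $\operatorname{rank}(\mathbf{A}_k)\le r$ for all $k$ and \[ \gamma_{i1}\mathbf{A}_1+\gamma_{i2}\mathbf{A}_2+\cdots+\gamma_{in_1}\mathbf{A}_{n_1}=\mathbf{0}\qquad\text{for all } i=1,2,\dots,n_1-n_2, \] we have \[ \dim\Big(\mathcal{C}\big(\mathbf{A}_1,\mathbf{A}_2,\dots,\mathbf{A}_{n_1}\big)\Big)\le n_2 r . \] Moreover, equality holds if, among the $n_1$ subspaces $\mathcal{C}(\mathbf{A}_k)$, some $n_2$ of them have dimension $r$ and are linearly independent (their sum is direct), and $m_1\ge n_2 r$.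
   Context: $\mathcal{C}(\mathbf{A}_1,\dots,\mathbf{A}_n)$ denotes the column space of the horizontally concatenated matrix $[\mathbf{A}_1\ \mathbf{A}_2\ \cdots\ \mathbf{A}_n]$. *)

(* Defs.v *)
From HB Require Import structures.
From mathcomp Require Import all_boot all_order all_algebra.
From mathcomp Require Import all_classical all_reals all_analysis.
From mathcomp Require Import complex.

Set Implicit Arguments.
Unset Strict Implicit.
Unset Printing Implicit Defensive.

Import Order.TTheory GRing.Theory Num.Theory.
Local Open Scope ring_scope.
Local Open Scope classical_set_scope.

(* A complex-valued random variable is represented by its pair
   (real part, imaginary part) : R * R, which carries the product
   (Borel) measurable structure; [to_C] turns such a pair into a complex. *)
Definition to_C (R : realType) (z : (R * R)%type) : R[i] := Complex z.1 z.2.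

Definition lebesgue2 (R : realType) :=
  (lebesgue_measure \x (@lebesgue_measure R))%E.

(* Mutual independence of a finite family of random variables: the joint law
   is the product of the marginals on all measurable rectangles (choosing
   B i = setT recovers the product rule for every subfamily). *)
Definition mutually_independent d d' (Omega : measurableType d)
  (T : measurableType d') (R : realType) (P : probability Omega R)
  (I : finType) (X : I -> {mfun Omega >-> T}) : Prop :=
  forall B : I -> set T, (forall i, measurable (B i)) ->
    P (\bigcap_i (X i @^-1` B i)) = (\prod_(i : I) P (X i @^-1` B i))%E.

Definition identically_distributed d d' (Omega : measurableType d)
  (T : measurableType d') (R : realType) (P : probability Omega R)
  (I : finType) (X : I -> {mfun Omega >-> T}) : Prop :=
  forall i j (B : set T), measurable B ->
    distribution P (X i) B = distribution P (X j) B.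

(* Main.v *)
Require Import Defs.
From HB Require Import structures.
From mathcomp Require Import all_boot all_order all_algebra.
From mathcomp Require Import all_classical all_reals all_analysis.
From mathcomp Require Import complex.
Import Order.TTheory GRing.Theory Num.Theory.
Local Open Scope ring_scope.
Local Open Scope classical_set_scope.

Section LA.
Variable F : fieldType.

Lemma rank_sum_le (I : finType) (P : pred I) n m (B : I -> 'M[F]_(m, n)) :
  (\rank (\sum_(l | P l) <<B l>>)%MS <= \sum_(l | P l) \rank (B l))%N.
Proof.
elim/big_rec2: _ => [|l a S Pl IH]; first by rewrite mxrank0.
apply: leq_trans (mxrank_adds_leqif _ _).1 _.
by rewrite genmxE leq_add2l.
Qed.

Lemma la1 m1 m2 r n1 n2 (Hn : (n2 <= n1)%N)
  (g : 'I_(n1 - n2) -> 'I_n1 -> F) (A : 'I_n1 -> 'M[F]_(m1, m2)) :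
  \det (\matrix_(a, b) g a (widen_ord (leq_subr n2 n1) b)) != 0 ->
  (forall k, \rank (A k) <= r)%N ->
  (forall i, \sum_(k < n1) g i k *: A k = 0) ->
  (\rank (\mxrow_(k < n1) A k) <= n2 * r)%N.
Proof.
set k := (n1 - n2)%N => dG rA rel.
set c := widen_ord (leq_subr n2 n1).
set Gs := \matrix_(a, b) g a (c b).
have uG : Gs \in unitmx by rewrite unitmxE unitfE.
set N := invmx Gs.
pose Q := fun l : 'I_n1 => (k <= l)%N.
pose W := (\sum_(l | Q l) <<(A l)^T>>)%MS.
have claim : forall t : 'I_k, ((A (c t))^T <= W)%MS.
  move=> t.
  pose h := fun l : 'I_n1 => \sum_i N t i * g i l.
  have h0 : \sum_l h l *: A l = 0.
    rewrite /h.
    under eq_bigr do rewrite scaler_suml.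
    rewrite exchange_big /= big1 // => i _.
    under eq_bigr do rewrite -scalerA.
    by rewrite -scaler_sumr rel scaler0.
  have hc : forall b : 'I_k, h (c b) = (t == b)%:R.
    move=> b; have := congr1 (fun M : 'M[F]_k => M t b) (mulVmx uG).
    by rewrite !mxE => <-; apply: eq_bigr => i _; rewrite mxE.
  have eA : A (c t) = - \sum_(l | Q l) h l *: A l.
    have e1 : \sum_(l | ~~ Q l) h l *: A l = A (c t).
      rewrite (bigD1 (c t)) /=; last by rewrite /Q /= -ltnNge ltn_ord.
      rewrite hc eqxx scale1r big1 ?addr0 // => l /andP[nQ nlc].
      have lk : (l < k)%N by rewrite ltnNge.
      have [t' el] : exists t' : 'I_k, l = c t' by exists (Ordinal lk); apply: val_inj.
      move: nlc; rewrite el hc; case: (eqVneq t t') => [<-|ne]; first by rewrite eqxx.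
      by rewrite scale0r.
    by move: h0; rewrite (bigID Q) /= e1 => /eqP; rewrite addrC addr_eq0 => /eqP.
  rewrite eA linearN /= eqmx_opp linear_sum /=.
  apply: summx_sub => l Ql; rewrite linearZ /= scalemx_sub //.
  by rewrite (sumsmx_sup l) // genmxE.
rewrite -mxrank_tr tr_mxrow (eqmx_col (fun l => (A l)^T)).
have sub : ((\sum_l <<(A l)^T>>) <= W)%MS.
  apply/sumsmx_subP => l _; rewrite genmxE.
  case: (leqP k l) => kl; first by rewrite (sumsmx_sup l) // genmxE.
  have [t' ->] : exists t' : 'I_k, l = c t' by exists (Ordinal kl); apply: val_inj.
  exact: claim.
apply: leq_trans (mxrankS sub) _.
have := @rank_sum_le _ Q _ _ (fun l => (A l)^T). rewrite -/W => H. apply: (leq_trans H).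
apply: (@leq_trans (\sum_(l | Q l) r)%N).
  by apply: leq_sum => l _; rewrite mxrank_tr.
rewrite (eq_bigl (fun i : 'I_n1 => true && (k <= i)%N)) // -(big_geq_mkord k n1 xpredT (fun=> r)) sum_nat_const_nat.
by rewrite subKn.
Qed.

Lemma la2 m1 m2 r n1 n2 (A : 'I_n1 -> 'M[F]_(m1, m2)) :
  (\rank (\mxrow_(k < n1) A k) <= n2 * r)%N ->
  (exists S : {set 'I_n1},
          [/\ #|S| = n2,
              (forall k, k \in S -> \rank (A k) = r) &
              mxdirect (\sum_(k in S) <<(A k)^T>>)%MS]) ->
  \rank (\mxrow_(k < n1) A k) = (n2 * r)%N.
Proof.
move=> le [S [cS rS dS]]; apply/eqP; rewrite eqn_leq le /=.
rewrite -mxrank_tr tr_mxrow (eqmx_col (fun l => (A l)^T)).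
have sub : ((\sum_(l in S) <<(A l)^T>>) <= \sum_l <<(A l)^T>>)%MS.
  by apply/sumsmx_subP => l _; rewrite (sumsmx_sup l).
apply: leq_trans (mxrankS sub).
rewrite (mxdirectP dS) /=.
rewrite (eq_bigr (fun=> r)); first by rewrite sum_nat_const cS.
by move=> l lS; rewrite genmxE mxrank_tr rS.
Qed.
End LA.

Section CMeas.
Context {R : realType} {d : measure_display} {T : measurableType d}.

Definition cmeas (f : T -> R[i]) :=
  measurable_fun setT (fun t => complex.Re (f t)) /\
  measurable_fun setT (fun t => complex.Im (f t)).

Lemma cmeas_cst c : cmeas (fun=> c).
Proof. by split; exact: measurable_cst. Qed.

Lemma cmeasD f g : cmeas f -> cmeas g -> cmeas (fun t => f t + g t).
Proof.
move=> [f1 f2] [g1 g2]; split.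
- have -> : (fun t => complex.Re (f t + g t)) =
    (fun t => complex.Re (f t)) \+ (fun t => complex.Re (g t)).
    by apply/funext => t /=; case: (f t) => ? ?; case: (g t).
  exact: measurable_realfun.measurable_funD.
- have -> : (fun t => complex.Im (f t + g t)) =
    (fun t => complex.Im (f t)) \+ (fun t => complex.Im (g t)).
    by apply/funext => t /=; case: (f t) => ? ?; case: (g t).
  exact: measurable_realfun.measurable_funD.
Qed.

Lemma cmeasM f g : cmeas f -> cmeas g -> cmeas (fun t => f t * g t).
Proof.
move=> [f1 f2] [g1 g2]; split.
- have -> : (fun t => complex.Re (f t * g t)) =
    ((fun t => complex.Re (f t)) \* (fun t => complex.Re (g t))) \-
    ((fun t => complex.Im (f t)) \* (fun t => complex.Im (g t))).
    by apply/funext => t /=; case: (f t) => ? ?; case: (g t).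
  by apply: measurable_realfun.measurable_funB; apply: measurable_realfun.measurable_funM.
- have -> : (fun t => complex.Im (f t * g t)) =
    ((fun t => complex.Re (f t)) \* (fun t => complex.Im (g t))) \+
    ((fun t => complex.Im (f t)) \* (fun t => complex.Re (g t))).
    by apply/funext => t /=; case: (f t) => ? ?; case: (g t).
  by apply: measurable_realfun.measurable_funD; apply: measurable_realfun.measurable_funM.
Qed.

Lemma cmeas_sum (I : Type) (s : seq I) (P : pred I) (F : I -> T -> R[i]) :
  (forall i, cmeas (F i)) -> cmeas (fun t => \sum_(i <- s | P i) F i t).
Proof.
move=> HF; elim: s => [|a s IH].
  have -> : (fun t => \sum_(i <- [::] | P i) F i t) = fun=> 0.
    by apply/funext => t; rewrite big_nil.
  exact: cmeas_cst.
have -> : (fun t => \sum_(i <- a :: s | P i) F i t) =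
  fun t => (if P a then F a t else 0) + \sum_(i <- s | P i) F i t.
  by apply/funext => t; rewrite big_cons; case: (P a); rewrite ?add0r.
apply: cmeasD => //; case: (P a) => //; exact: cmeas_cst.
Qed.

Lemma cmeas_prod (I : Type) (s : seq I) (F : I -> T -> R[i]) :
  (forall i, cmeas (F i)) -> cmeas (fun t => \prod_(i <- s) F i t).
Proof.
move=> HF; elim: s => [|a s IH].
  have -> : (fun t => \prod_(i <- [::]) F i t) = fun=> 1.
    by apply/funext => t; rewrite big_nil.
  exact: cmeas_cst.
have -> : (fun t => \prod_(i <- a :: s) F i t) =
  fun t => F a t * \prod_(i <- s) F i t.
  by apply/funext => t; rewrite big_cons.
exact: cmeasM.
Qed.

Lemma cmeas_det n (M : T -> 'M[R[i]]_n) :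
  (forall i j, cmeas (fun t => M t i j)) -> cmeas (fun t => \det (M t)).
Proof.
move=> HM; rewrite /determinant.
apply: cmeas_sum => s; apply: cmeasM; first exact: cmeas_cst.
by apply: cmeas_prod => i; apply: HM.
Qed.

Lemma cmeas_toC (f : T -> (R * R)%type) : measurable_fun setT f ->
  cmeas (fun t => to_C (f t)).
Proof.
move=> mf; split.
- exact: (measurableT_comp (@measurable_fst _ _ R R) mf).
- exact: (measurableT_comp (@measurable_snd _ _ R R) mf).
Qed.

Lemma cmeas_eq0 f : cmeas f -> measurable [set t | f t = 0].
Proof.
move=> [f1 f2].
have -> : [set t | f t = 0] =
  (setT `&` (fun t => complex.Re (f t)) @^-1` [set 0]) `&`
  (setT `&` (fun t => complex.Im (f t)) @^-1` [set 0]).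
  apply/seteqP; split => t /=.
    by move=> ->.
  by case: (f t) => a b /= [[_ ->] [_ ->]].
apply: measurableI; [exact: f1 | exact: f2].
Qed.
End CMeas.
Section Indep.
Context {R : realType} {d : measure_display} {Omega : measurableType d}
  (P : probability Omega R) (I : finType)
  (X : I -> {mfun Omega >-> (R * R)%type}).
Hypothesis indep : mutually_independent P X.
Variable j0 : I.

Definition Gen : set (set Omega) := [set F | exists B : I -> set (R * R)%type,
  [/\ forall i, measurable (B i), B j0 = setT & F = \bigcap_i (X i @^-1` B i)]].

Lemma pre_meas i (B : set (R * R)%type) : measurable B -> measurable (X i @^-1` B).
Proof.
by move=> mB; rewrite -[X in measurable X]setTI; apply: measurable_funPT.
Qed.

Lemma Gen_sub : Gen `<=` measurable.
Proof.
move=> _ [B [mB _ ->]]; apply: fin_bigcap_measurable; first exact: finite_finset.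
by move=> i _; apply: pre_meas.
Qed.

Lemma GenT : Gen setT.
Proof.
exists (fun=> setT); split => //.
by apply/seteqP; split => w //= _ i _.
Qed.

Lemma GenI : setI_closed Gen.
Proof.
move=> _ _ [B1 [mB1 B1j ->]] [B2 [mB2 B2j ->]].
exists (fun i => B1 i `&` B2 i); split.
- by move=> i; apply: measurableI.
- by rewrite B1j B2j setIT.
- apply/seteqP; split => w /=.
    by move=> [H1 H2] i _; split; [exact: H1|exact: H2].
  by move=> H; split => i _; have [] := H i Logic.I.
Qed.

Lemma Gen_indep A : measurable A -> forall F, Gen F ->
  P (X j0 @^-1` A `&` F) = (P (X j0 @^-1` A) * P F)%E.
Proof.
move=> mA _ [B [mB Bj0 ->]].
pose B' := fun i => if i == j0 then A else B i.
have mB' : forall i, measurable (B' i) by move=> i; rewrite /B'; case: eqP.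
have e1 : X j0 @^-1` A `&` \bigcap_i X i @^-1` B i = \bigcap_i X i @^-1` B' i.
  apply/seteqP; split => w /=.
    move=> [XA H] i _; rewrite /B'; case: eqP => [->//|_]; exact: H.
  move=> H; split; first by have := H j0 Logic.I; rewrite /B' eqxx.
  move=> i _; have := H i Logic.I; rewrite /B'; case: eqP => [->|//].
  by rewrite Bj0.
rewrite e1 (@indep B' mB') (@indep B mB) (bigD1 j0) //= [in RHS](bigD1 j0) //=.
rewrite /B' eqxx Bj0 preimage_setT probability_setT mul1e.
by congr (_ * _)%E; apply: eq_bigr => i /negbTE ->.
Qed.

Lemma sigma_indep A : measurable A -> forall E, <<s Gen >> E ->
  P (X j0 @^-1` A `&` E) = (P (X j0 @^-1` A) * P E)%E.
Proof.
move=> mA E GE.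
have mXA := @pre_meas j0 A mA.
have c0 : (0 <= fine (P (X j0 @^-1` A)))%R := fine_ge0 (measure_ge0 _ _).
pose m1 := mrestr P mXA.
pose m2 := mscale (NngNum c0) P.
have fA := fineK (fin_num_measure P _ mXA).
have m1E F : m1 F = P (F `&` X j0 @^-1` A) by [].
have m2E F : m2 F = ((fine (P (X j0 @^-1` A)))%:E * P F)%E by [].
have eq : m1 E = m2 E.
  apply: (@g_sigma_algebra_measure_unique _ R Omega Gen Gen_sub (fun=> setT)
    (fun=> GenT) _ m1 m2 GenI) => //.
  - by apply/seteqP; split => w // _; exists 0%N.
  - move=> F GF; change (P (F `&` X j0 @^-1` A) = ((fine (P (X j0 @^-1` A)))%:E * P F)%E).
    rewrite fA setIC.
    exact: Gen_indep.
  - move=> _; change (P (setT `&` X j0 @^-1` A) < +oo)%E; rewrite setTI.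
    by rewrite -ge0_fin_numE // fin_num_measure.
have eq' : P (E `&` X j0 @^-1` A) = ((fine (P (X j0 @^-1` A)))%:E * P E)%E := eq.
by rewrite setIC eq' fA.
Qed.

Lemma indep_prod du (U : measurableType du) (Z : g_sigma_algebraType Gen -> U)
  (mZ : measurable_fun setT Z) (D : set (U * (R * R))%type) :
  measurable D ->
  (forall u, distribution P (X j0) (xsection D u) = 0%E) ->
  P [set w : Omega | D (Z w, X j0 w)] = 0%E.
Proof.
move=> mD H0.
have sGm : <<s Gen >> `<=` measurable :=
  smallest_sub (@sigma_algebra_measurable _ Omega) Gen_sub.
have mZ' : measurable_fun (T := Omega) setT Z.
  by move=> _ S mS; apply: sGm; exact: mZ.
pose Zm : {mfun Omega >-> U} := mfun_Sub (mem_set mZ' : (Z : Omega -> U) \in mfun).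
have mW : measurable_fun (T := Omega) setT (fun w => (Z w, X j0 w)).
  exact: measurable_fun_pair.
pose Wm : {mfun Omega >-> (U * (R * R))%type} :=
  mfun_Sub (mem_set mW : ((fun w => (Z w, X j0 w)) : Omega -> _) \in mfun).
have E : (distribution P Zm \x distribution P (X j0))%E D = distribution P Wm D.
  apply: product_measure_unique => // S B mS mB.
  change (P ((fun w => (Z w, X j0 w)) @^-1` (S `*` B)) =
    (P (Z @^-1` S) * P (X j0 @^-1` B))%E).
  have -> : (fun w => (Z w, X j0 w)) @^-1` (S `*` B) =
            X j0 @^-1` B `&` (setT `&` Z @^-1` S).
    by apply/seteqP; split => w /=; [move=> [? ?]|move=> [? [_ ?]]].
  rewrite sigma_indep //; last exact: mZ.
  by rewrite muleC setTI.
have -> : P [set w : Omega | D (Z w, X j0 w)] = distribution P Wm D by [].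
rewrite -E.
change (\int[distribution P Zm]_u (distribution P (X j0) (xsection D u)) = 0)%E.
by apply: integral0_eq => u _; exact: H0.
Qed.
Lemma indep_negl du (U : measurableType du) (Z : g_sigma_algebraType Gen -> U)
  (mZ : measurable_fun setT Z) (D : set (U * (R * R))%type) :
  measurable D ->
  (forall u, distribution P (X j0) (xsection D u) = 0%E) ->
  P.-negligible [set w : Omega | D (Z w, X j0 w)].
Proof.
move=> mD H0; exists [set w : Omega | D (Z w, X j0 w)]; split => //.
  have sGm : <<s Gen >> `<=` measurable :=
    smallest_sub (@sigma_algebra_measurable _ Omega) Gen_sub.
  have mZ' : measurable_fun (T := Omega) setT Z.
    by move=> _ S mS; apply: sGm; exact: mZ.
  have mW : measurable_fun (T := Omega) setT (fun w => (Z w, X j0 w)).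
    exact: measurable_fun_pair.
  rewrite -[X in measurable X]setTI; exact: mW.
exact: indep_prod.
Qed.
End Indep.

Lemma det_split (F : comNzRingType) n (A : 'M[F]_n.+1) :
  \det A = A ord0 ord0 * \det (row' ord0 (col' ord0 A)) +
    \det (\matrix_(a, b) (if (a == ord0) && (b == ord0) then 0 else A a b)).
Proof.
set A' := \matrix_(a, b) _.
have nl : forall a : 'I_n, (lift ord0 a == ord0) = false.
  by move=> a; rewrite eq_sym (negbTE (neq_lift _ _)).
rewrite (expand_det_row _ ord0) [\det A'](expand_det_row _ ord0).
have ec : forall j, cofactor A ord0 j = cofactor A' ord0 j.
  move=> j; rewrite /cofactor; congr (_ * \det _); apply/matrixP => a b.
  by rewrite !mxE nl.
rewrite (bigD1 ord0) // [X in _ = _ + X](bigD1 ord0) //=.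
rewrite mxE eqxx /= mul0r add0r /cofactor addn0 expr0 mul1r.
congr (_ + _); apply: eq_bigr => j jn0; rewrite -/(cofactor A _ _) ec mxE.
by rewrite (negbTE jn0) andbF.
Qed.

Section Leb.
Context {R : realType}.
Lemma lebesgue2_null (p : (R * R)%type) : (@lebesgue2 R).-null_set [set p].
Proof.
have mp : measurable [set p].
  have -> : [set p] = [set p.1] `*` [set p.2].
    by apply/seteqP; split => -[x y] /=; [move=> <- | case: p => ? ? /= [-> ->]].
  by apply: measurableX; apply: measurable_set1.
apply/measure0_null_setP; first exact: mp.
have -> : [set p] = [set p.1] `*` [set p.2].
  by clear mp; apply/seteqP; split => -[x y] /=; [move=> <- | case: p => ? ? /= [-> ->]].
rewrite /lebesgue2. have := @product_measure1E _ _ _ _ R (@lebesgue_measure R) (@lebesgue_measure R) [set p.1] [set p.2] (measurable_set1 _) (measurable_set1 _). move=> H. transitivity ((@lebesgue_measure R [set p.1]) * @lebesgue_measure R [set p.2])%E; first exact: H.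
by rewrite lebesgue_measure_set1 mul0e.
Qed.
End Leb.

Section Det.
Context {R : realType} {d : measure_display} {Omega : measurableType d}
  (P : probability Omega R) (I : finType)
  (X : I -> {mfun Omega >-> (R * R)%type}).
Hypothesis indep : mutually_independent P X.
Hypothesis ac : forall j, distribution P (X j) `<< @lebesgue2 R.

Definition Mx {k} (f : 'I_k * 'I_k -> I) (w : Omega) : 'M[R[i]]_k :=
  \matrix_(a, b) to_C (X (f (a, b)) w).

Lemma X_meas_Gen j0 i : i != j0 ->
  measurable_fun (T := g_sigma_algebraType (@Gen _ _ _ I X j0)) setT (X i).
Proof.
move=> ij _ S mS; apply: sub_sigma_algebra.
exists (fun k => if k == i then S else setT); split.
- by move=> k; case: eqP.
- by rewrite eq_sym (negbTE ij).
- apply/seteqP; split => w /=.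
    move=> [_ XS] k _; case: eqP => [->//|_]; done.
  by move=> H; split => //; have := H i Logic.I; rewrite eqxx.
Qed.

Let toC_RI (z : R[i]) : to_C (complex.Re z, complex.Im z) = z.
Proof. by case: z. Qed.

Lemma xsection_null j0 (D : set (((R * R) * (R * R)) * (R * R))%type)
  (HD : D = [set p | to_C p.1.1 != 0 /\ to_C p.2 * to_C p.1.1 + to_C p.1.2 = 0])
  (mD : measurable D) u :
  distribution P (X j0) (xsection D u) = 0%E.
Proof.
have mxs := measurable_xsection u mD.
case: (eqVneq (to_C u.1) 0) => [a0|an0].
  have -> : xsection D u = set0.
    apply/seteqP; split => x //=; rewrite /xsection HD /= inE /= a0.
    by move=> [/eqP].
  exact: measure0.
pose c := - to_C u.2 / to_C u.1.
have N := @ac j0 _ (lebesgue2_null (complex.Re c, complex.Im c)).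
apply: N => //.
move=> x; rewrite /xsection HD /= inE /= => -[_ e].
have ex : to_C x = c.
  rewrite /c; apply: (mulIf an0); rewrite mulrVK ?unitfE //.
  by apply/eqP; rewrite -addr_eq0 e.
clear e; case: x ex => x1 x2 ex.
have [-> ->] : x1 = complex.Re c /\ x2 = complex.Im c by rewrite -ex.
by [].
Qed.

Lemma det_null k : forall f : 'I_k * 'I_k -> I, injective f ->
  P.-negligible [set w | \det (Mx f w) = 0].
Proof.
elim: k => [|k IH] f injf.
  apply: (negligibleS _ (negligible_set0 P)) => w /=.
  by rewrite det_mx00 => /eqP; rewrite oner_eq0.
set j0 := f (ord0, ord0).
pose f' := fun p : 'I_k * 'I_k => f (lift ord0 p.1, lift ord0 p.2).
have injf' : injective f'.
  by move=> [a b] [a' b'] /injf [] /addnI ha /addnI hb; congr pair; apply: val_inj.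
pose M' := fun w : Omega => (\matrix_(a, b) (if (a == ord0) && (b == ord0)
  then 0 else to_C (X (f (a, b)) w)) : 'M[R[i]]_k.+1).
have nl : forall a : 'I_k, (lift ord0 a == ord0) = false.
  by move=> a; rewrite eq_sym (negbTE (neq_lift _ _)).
have key : forall w, \det (Mx f w) = to_C (X j0 w) * \det (Mx f' w) + \det (M' w).
  move=> w.
  have e1 : row' ord0 (col' ord0 (Mx f w)) = Mx f' w.
    by apply/matrixP => a b; rewrite !mxE.
  have e2 : \matrix_(a, b) (if (a == ord0) && (b == ord0) then 0 else Mx f w a b)
      = M' w.
    by apply/matrixP => a b; rewrite !mxE.
  by rewrite det_split e1 e2 mxE.
pose Z := fun w : Omega => ((complex.Re (\det (Mx f' w)), complex.Im (\det (Mx f' w))),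
  (complex.Re (\det (M' w)), complex.Im (\det (M' w)))).
pose D := [set p : (((R * R) * (R * R)) * (R * R))%type |
  to_C p.1.1 != 0 /\ to_C p.2 * to_C p.1.1 + to_C p.1.2 = 0].
have mD : measurable D.
  have c11 : cmeas (fun p : (((R * R) * (R * R)) * (R * R))%type => to_C p.1.1).
    by apply: cmeas_toC; exact: (measurableT_comp measurable_fst measurable_fst).
  have c12 : cmeas (fun p : (((R * R) * (R * R)) * (R * R))%type => to_C p.1.2).
    by apply: cmeas_toC; exact: (measurableT_comp measurable_snd measurable_fst).
  have c2 : cmeas (fun p : (((R * R) * (R * R)) * (R * R))%type => to_C p.2).
    by apply: cmeas_toC; exact: measurable_snd.
  have -> : D = ~` [set p | to_C p.1.1 = 0] `&`
      [set p | to_C p.2 * to_C p.1.1 + to_C p.1.2 = 0].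
    apply/seteqP; split => p /=.
      by move=> [/eqP h e].
    by move=> [h e]; split => //; apply/eqP.
  apply: measurableI; first exact/measurableC/cmeas_eq0.
  by apply: cmeas_eq0; apply: cmeasD => //; apply: cmeasM.
pose T' := g_sigma_algebraType (@Gen _ _ _ I X j0).
have cf' : cmeas (fun w : T' => \det (Mx f' w)).
  apply: cmeas_det => a b.
  have -> : (fun w : T' => Mx f' w a b) = fun w : T' => to_C (X (f' (a, b)) w).
    by apply/funext => w; rewrite mxE.
  apply: cmeas_toC; apply: X_meas_Gen; apply/eqP => /injf [] h _.
  by move: h; rewrite /bump leq0n add1n.
have cM' : cmeas (fun w : T' => \det (M' w)).
  apply: cmeas_det => a b.
  have -> : (fun w : T' => M' w a b) = fun w : T' =>
      if (a == ord0) && (b == ord0) then 0 else to_C (X (f (a, b)) w).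
    by apply/funext => w; rewrite mxE.
  case h : ((a == ord0) && (b == ord0)); first exact: cmeas_cst.
  rewrite /=.
  apply: cmeas_toC; apply: X_meas_Gen; apply/eqP => /injf [] ha hb.
  by move: h; rewrite ha hb eqxx.
have mZ : measurable_fun (T := T') setT Z.
  by apply: measurable_fun_pair; apply: measurable_fun_pair;
    [case: cf'|case: cf'|case: cM'|case: cM'].
have N2 := @indep_negl _ _ _ P I X indep j0 _ _ Z mZ D mD
  (fun u => @xsection_null j0 D (erefl _) mD u).
apply: (negligibleS _ (negligibleU (IH f' injf') N2)).
move=> w /= H0; rewrite key in H0.
case: (eqVneq (\det (Mx f' w)) 0) => [->|an0]; [by left | right].
by rewrite /D /= !toC_RI; split.
Qed.
End Det.

Theorem lemma1 (R : realType) (d : measure_display) (Omega : measurableType d)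
  (P : probability Omega R) (m1 m2 r n1 n2 : nat)
  (gamma : 'I_(n1 - n2) * 'I_n1 -> {mfun Omega >-> (R * R)%type}) :
  (n2 <= n1)%N -> (1 <= n1)%N ->
  mutually_independent P gamma ->
  identically_distributed P gamma ->
  (forall j, distribution P (gamma j) `<< @lebesgue2 R) ->
  {ae P, forall w : Omega,
    forall A : 'I_n1 -> 'M[R[i]]_(m1, m2),
      (forall k, \rank (A k) <= r)%N ->
      (forall i : 'I_(n1 - n2),
         \sum_(k < n1) to_C (gamma (i, k) w) *: A k = 0) ->
      (\rank (\mxrow_(k < n1) A k) <= n2 * r)%N /\
      ((exists S : {set 'I_n1},
          [/\ #|S| = n2,
              (forall k, k \in S -> \rank (A k) = r) &
              mxdirect (\sum_(k in S) <<(A k)^T>>)%MS]) ->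
       (n2 * r <= m1)%N ->
       \rank (\mxrow_(k < n1) A k) = (n2 * r)%N)}.
Proof.
move=> Hn _ indep _ ac.
pose f := fun p : 'I_(n1 - n2) * 'I_(n1 - n2) =>
  (p.1, widen_ord (leq_subr n2 n1) p.2).
have injf : injective f.
  move=> [a b] [a' b'] [-> hb]; congr pair; apply: val_inj.
  exact: hb.
have N := @det_null R d Omega P _ gamma indep ac _ f injf.
apply: (negligibleS _ N) => w /= nQ.
apply: contrapT => dn; apply: nQ => A rA rel.
have dn' : \det (\matrix_(a, b) (fun i l => to_C (gamma (i, l) w)) a
    (widen_ord (leq_subr n2 n1) b)) != 0.
  by apply/eqP; exact: dn.
have le := @la1 _ m1 m2 r n1 n2 Hn (fun i l => to_C (gamma (i, l) w)) A dn' rA rel.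
by split => // HS _; exact: (@la2 _ m1 m2 r n1 n2 A le HS).
Qed.
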